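(* Let $M$ be a timelike surface in $\mathbb{R}^{n,1}$ with a canonical null direction with respect to a constant unit spacelike vector $Z$, with $W$ and $a$ as below. Then the Gaussian curvature of $M$ is $K=Z^{\top}(a)$.
   Context: $\mathbb{R}^{n,1}$ is $\mathbb{R}^{n+1}$ with the metric $-dx_1^2+dx_2^2+\dots+dx_{n+1}^2$. A surface is timelike if the induced metric has signature $(1,1)$; a vector $v$ is lightlike if $v\ne0$ and $\langle v,v\rangle=0$. For a constant vector $Z$, $Z=Z^\top+Z^\perp$ along $M$; $M$ has a canonical null direction with respect to $Z$ if $Z^\top$ is lightlike everywhere on $M$. $W$ is the unique lightlike tangent field with $\langle Z^\top,W\rangle=-1$, and $a:=\langle II(W,W),Z^\perp\rangle$, $II$ the second fundamental form. $K$ is the (sectional) Gaussian curvature of the induced Lorentzian metric. *)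

(* Defs.v *)
From Stdlib Require Import Reals ClassicalEpsilon.
Open Scope R_scope.

(** * Minkowski space R^{n,1}
    A vector of R^{n+1} is a function [nat -> R]; only components [0..n]
    matter.  Component 0 is the timelike coordinate x_1 of the paper. *)
Definition vec := nat -> R.

Fixpoint sumR (k : nat) (f : nat -> R) : R :=
  match k with O => 0 | S k' => sumR k' f + f k' end.

Definition minner (n : nat) (v w : vec) : R :=
  - v O * w O + sumR n (fun i => v (S i) * w (S i)).

Definition vadd (v w : vec) : vec := fun i => v i + w i.
Definition vsub (v w : vec) : vec := fun i => v i - w i.
Definition vscale (c : R) (v : vec) : vec := fun i => c * v i.

Definition vnonzero (n : nat) (v : vec) : Prop := exists i, (i <= n)%nat /\ v i <> 0.

Definition lightlike (n : nat) (v : vec) : Prop := vnonzero n v /\ minner n v v = 0.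

Definition pt := (R * R)%type.

(** partial derivatives (the value 0 is a junk value when the derivative
    does not exist; all functions used below are smooth on the domain). *)
Definition pd1 (f : pt -> R) (p : pt) : R :=
  match excluded_middle_informative
          (exists l, derivable_pt_lim (fun s => f (s, snd p)) (fst p) l) with
  | left H => proj1_sig (constructive_indefinite_description _ H)
  | right _ => 0
  end.

Definition pd2 (f : pt -> R) (p : pt) : R :=
  match excluded_middle_informative
          (exists l, derivable_pt_lim (fun s => f (fst p, s)) (snd p) l) with
  | left H => proj1_sig (constructive_indefinite_description _ H)
  | right _ => 0
  end.

(** partial derivative with respect to coordinate i (0 = u, 1 = v) *)
Definition pd (i : nat) (f : pt -> R) : pt -> R :=
  match i with O => pd1 f | _ => pd2 f end.

Definition vpd (i : nat) (X : pt -> vec) : pt -> vec :=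
  fun p k => pd i (fun q => X q k) p.

Definition open2 (U : pt -> Prop) : Prop :=
  forall p, U p -> exists r, 0 < r /\
    forall q, Rabs (fst q - fst p) < r -> Rabs (snd q - snd p) < r -> U q.

Definition continuous_at2 (f : pt -> R) (p : pt) : Prop :=
  forall eps, 0 < eps -> exists del, 0 < del /\
    forall q, Rabs (fst q - fst p) < del -> Rabs (snd q - snd p) < del ->
      Rabs (f q - f p) < eps.

Fixpoint itd (w : list nat) (f : pt -> R) : pt -> R :=
  match w with nil => f | cons i w' => pd i (itd w' f) end.

Definition smooth_on (U : pt -> Prop) (f : pt -> R) : Prop :=
  forall (w : list nat) (p : pt), U p ->
    continuous_at2 (itd w f) p /\
    (exists l, derivable_pt_lim (fun s => itd w f (s, snd p)) (fst p) l) /\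
    (exists l, derivable_pt_lim (fun s => itd w f (fst p, s)) (snd p) l).

Section Surface.
Variable n : nat.
Variable X : pt -> vec.

Definition tvec (c0 c1 : R) (p : pt) : vec :=
  vadd (vscale c0 (vpd 0 X p)) (vscale c1 (vpd 1 X p)).

Definition immersion_at (p : pt) : Prop :=
  forall a b, (forall k, (k <= n)%nat -> tvec a b p k = 0) -> a = 0 /\ b = 0.

Definition g (i j : nat) (p : pt) : R := minner n (vpd i X p) (vpd j X p).

Definition timelike_at (p : pt) : Prop :=
  exists a b c d,
    minner n (tvec a b p) (tvec a b p) = -1 /\
    minner n (tvec c d p) (tvec c d p) = 1 /\
    minner n (tvec a b p) (tvec c d p) = 0.

Definition detg (p : pt) : R := g 0 0 p * g 1 1 p - g 0 1 p * g 0 1 p.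

Definition ginv (i j : nat) (p : pt) : R :=
  match i, j with
  | O, O => g 1 1 p / detg p
  | S _, S _ => g 0 0 p / detg p
  | _, _ => - g 0 1 p / detg p
  end.

Definition Chr (k i j : nat) (p : pt) : R :=
  / 2 * (ginv k 0 p * (pd i (g j 0) p + pd j (g i 0) p - pd 0 (g i j) p)
       + ginv k 1 p * (pd i (g j 1) p + pd j (g i 1) p - pd 1 (g i j) p)).

(** Riemann tensor: R(d_i, d_j) d_k = Rup l i j k d_l, with
    R(A,B) = nabla_A nabla_B - nabla_B nabla_A - nabla_[A,B] *)
Definition Rup (l i j k : nat) (p : pt) : R :=
  pd i (Chr l j k) p - pd j (Chr l i k) p
  + (Chr 0 j k p * Chr l i 0 p + Chr 1 j k p * Chr l i 1 p)
  - (Chr 0 i k p * Chr l j 0 p + Chr 1 i k p * Chr l j 1 p).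

(** Gaussian (sectional) curvature of the induced metric:
    K = <R(X_u,X_v)X_v, X_u> / (g_uu g_vv - g_uv^2) *)
Definition GaussK (p : pt) : R :=
  (g 0 0 p * Rup 0 0 1 1 p + g 1 0 p * Rup 1 0 1 1 p) / detg p.

Definition tancoef (k : nat) (v : vec) (p : pt) : R :=
  ginv k 0 p * minner n v (vpd 0 X p) + ginv k 1 p * minner n v (vpd 1 X p).

Definition tanproj (v : vec) (p : pt) : vec :=
  tvec (tancoef 0 v p) (tancoef 1 v p) p.

Definition normproj (v : vec) (p : pt) : vec := vsub v (tanproj v p).

Definition II (i j : nat) (p : pt) : vec := normproj (vpd i (vpd j X) p) p.

Definition IIv (v0 v1 w0 w1 : R) (p : pt) : vec :=
  fun k => v0 * w0 * II 0 0 p k + v0 * w1 * II 0 1 p k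
         + v1 * w0 * II 1 0 p k + v1 * w1 * II 1 1 p k.

End Surface.

(* Main.v *)
Require Import Defs.
From Stdlib Require Import Reals Lra Field ClassicalEpsilon Classical FunctionalExtensionality List.
Open Scope R_scope.

Inductive E :=
 | EV (a b c d : nat) | EZ (a b : nat) | EW (i : nat) | EC (r : R)
 | EA (x y : E) | EM (x y : E) | EI (x : E) | EN (x : E).

Definition ES x y := EA x (EN y).

Fixpoint dE (i : nat) (e : E) : E :=
  match e with
  | EV a b c d => match i with
                  | O => EA (EV (S a) b c d) (EV a b (S c) d)
                  | S _ => EA (EV a (S b) c d) (EV a b c (S d)) end
  | EZ a b => match i with O => EZ (S a) b | S _ => EZ a (S b) end
  | EW _ => EC 0
  | EC _ => EC 0
  | EA x y => EA (dE i x) (dE i y)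
  | EM x y => EA (EM (dE i x) y) (EM x (dE i y))
  | EI x => EM (EN (dE i x)) (EM (EI x) (EI x))
  | EN x => EN (dE i x)
  end.

Section Ev.
Variable rv : nat -> nat -> nat -> nat -> R.
Variable rz : nat -> nat -> R.
Variable rw : nat -> R.
Fixpoint ev (e : E) : R :=
  match e with
  | EV a b c d => rv a b c d
  | EZ a b => rz a b
  | EW i => rw i
  | EC r => r
  | EA x y => ev x + ev y
  | EM x y => ev x * ev y
  | EI x => / ev x
  | EN x => - ev x
  end.
Variable v0 v1 : R.
Variable dw : nat -> R.
Fixpoint evD (e : E) : R :=
  match e with
  | EV a b c d => v0 * (rv (S a) b c d + rv a b (S c) d) + v1 * (rv a (S b) c d + rv a b c (S d))
  | EZ a b => v0 * rz (S a) b + v1 * rz a (S b)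
  | EW i => dw i
  | EC r => 0
  | EA x y => evD x + evD y
  | EM x y => evD x * ev y + ev x * evD y
  | EI x => - evD x * / (ev x * ev x)
  | EN x => - evD x
  end.
End Ev.

Definition jxa (i : nat) : nat := match i with O => 1%nat | _ => 0%nat end.
Definition jxb (i : nat) : nat := match i with O => 0%nat | _ => 1%nat end.
Definition GE (i j : nat) : E := EV (jxa i) (jxb i) (jxa j) (jxb j).
Definition detE : E := ES (EM (GE 0 0) (GE 1 1)) (EM (GE 0 1) (GE 0 1)).
Definition ginvE (k l : nat) : E :=
  match k, l with
  | O, O => EM (GE 1 1) (EI detE)
  | S _, S _ => EM (GE 0 0) (EI detE)
  | _, _ => EM (EN (GE 0 1)) (EI detE)
  end.
Definition ChrE (k i j : nat) : E :=
  EM (EC (/2)) (EA (EM (ginvE k 0) (ES (EA (dE i (GE j 0)) (dE j (GE i 0))) (dE 0 (GE i j))))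
                   (EM (ginvE k 1) (ES (EA (dE i (GE j 1)) (dE j (GE i 1))) (dE 1 (GE i j))))).
Definition RupE (l i j k : nat) : E :=
  ES (EA (ES (dE i (ChrE l j k)) (dE j (ChrE l i k)))
         (EA (EM (ChrE 0 j k) (ChrE l i 0)) (EM (ChrE 1 j k) (ChrE l i 1))))
     (EA (EM (ChrE 0 i k) (ChrE l j 0)) (EM (ChrE 1 i k) (ChrE l j 1))).
Definition KE : E := EM (EA (EM (GE 0 0) (RupE 0 0 1 1)) (EM (GE 1 0) (RupE 1 0 1 1))) (EI detE).
Definition fE (i : nat) : E := EZ (jxa i) (jxb i).
Definition TcE (k : nat) : E := EA (EM (ginvE k 0) (fE 0)) (EM (ginvE k 1) (fE 1)).
Definition quad (u0 u1 v0 v1 : E) : E :=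
  EA (EA (EA (EM (EM u0 v0) (GE 0 0)) (EM (EM u0 v1) (GE 0 1)))
             (EM (EM u1 v0) (GE 1 0))) (EM (EM u1 v1) (GE 1 1)).
Definition CE := quad (TcE 0) (TcE 1) (TcE 0) (TcE 1).
Definition E1E := quad (EW 0) (EW 1) (EW 0) (EW 1).
Definition E2E := quad (TcE 0) (TcE 1) (EW 0) (EW 1).
Definition tcV (a b k : nat) : E := EA (EM (ginvE k 0) (EV a b 1 0)) (EM (ginvE k 1) (EV a b 0 1)).
Definition aab (a b : nat) : E :=
  EA (ES (ES (EZ a b) (EA (EM (TcE 0) (EV a b 1 0)) (EM (TcE 1) (EV a b 0 1))))
             (EA (EM (tcV a b 0) (fE 0)) (EM (tcV a b 1) (fE 1))))
     (quad (tcV a b 0) (tcV a b 1) (TcE 0) (TcE 1)).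
Definition AE : E :=
  EA (EA (EA (EM (EM (EW 0) (EW 0)) (aab 2 0)) (EM (EM (EW 0) (EW 1)) (aab 1 1)))
         (EM (EM (EW 1) (EW 0)) (aab 1 1))) (EM (EM (EW 1) (EW 1)) (aab 0 2)).
Definition dCW : E := EA (EM (EW 0) (dE 0 CE)) (EM (EW 1) (dE 1 CE)).
Definition hessC (l m : nat) : E :=
  ES (dE l (dE m CE)) (EA (EM (ChrE 0 l m) (dE 0 CE)) (EM (ChrE 1 l m) (dE 1 CE))).
Definition HC : E :=
  EA (EA (EA (EM (EM (EW 0) (EW 0)) (hessC 0 0)) (EM (EM (EW 0) (EW 1)) (hessC 0 1)))
         (EM (EM (EW 1) (EW 0)) (hessC 1 0))) (EM (EM (EW 1) (EW 1)) (hessC 1 1)).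

Definition symV (r : nat -> nat -> nat -> nat -> R) (a b c d : nat) : R :=
  if Nat.leb (a * 10 + b) (c * 10 + d) then r a b c d else r c d a b.

Lemma param (r : nat -> nat -> nat -> nat -> R) (rz : nat -> nat -> R) (rw : nat -> R) :
  ev (symV r) rz rw detE <> 0 ->
  ev (symV r) rz rw CE = 0 -> ev (symV r) rz rw E1E = 0 -> ev (symV r) rz rw E2E = -1 ->
  (ev (symV r) rz rw (TcE 0) <> 0 \/ ev (symV r) rz rw (TcE 1) <> 0) ->
  exists t0 t1, t0 * rw 1%nat - t1 * rw 0%nat <> 0 /\
    r 1%nat 0%nat 1%nat 0%nat = 2 * rw 1%nat * t1 / ((t0 * rw 1%nat - t1 * rw 0%nat) * (t0 * rw 1%nat - t1 * rw 0%nat)) /\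
    r 0%nat 1%nat 1%nat 0%nat = - (rw 1%nat * t0 + t1 * rw 0%nat) / ((t0 * rw 1%nat - t1 * rw 0%nat) * (t0 * rw 1%nat - t1 * rw 0%nat)) /\
    r 0%nat 1%nat 0%nat 1%nat = 2 * rw 0%nat * t0 / ((t0 * rw 1%nat - t1 * rw 0%nat) * (t0 * rw 1%nat - t1 * rw 0%nat)) /\
    rz 1%nat 0%nat = t1 / (t0 * rw 1%nat - t1 * rw 0%nat) /\
    rz 0%nat 1%nat = - t0 / (t0 * rw 1%nat - t1 * rw 0%nat).
Proof.
  intros Hdet HC0 HE1 HE2 Ht.
  cbn -[Rinv] in *. unfold symV in *; cbn -[Rinv] in *.
  set (w0 := rw 0%nat) in *. set (w1 := rw 1%nat) in *.
  set (g00 := r 1%nat 0%nat 1%nat 0%nat) in *.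
  set (g01 := r 0%nat 1%nat 1%nat 0%nat) in *.
  set (g11 := r 0%nat 1%nat 0%nat 1%nat) in *.
  set (f0 := rz 1%nat 0%nat) in *.
  set (f1 := rz 0%nat 1%nat) in *.
  clearbody g00 g01 g11 f0 f1 w0 w1.
  set (t0 := g11 * / (g00 * g11 + - (g01 * g01)) * f0 + - g01 * / (g00 * g11 + - (g01 * g01)) * f1) in *.
  set (t1 := - g01 * / (g00 * g11 + - (g01 * g01)) * f0 + g00 * / (g00 * g11 + - (g01 * g01)) * f1) in *.
  assert (Hf0 : f0 = g00 * t0 + g01 * t1) by (unfold t0, t1; field; exact Hdet).
  assert (Hf1 : f1 = g01 * t0 + g11 * t1) by (unfold t0, t1; field; exact Hdet).
  clearbody t0 t1.
  assert (HC' : g00*t0*t0+2*g01*t0*t1+g11*t1*t1 = 0) by (rewrite <- HC0; ring).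
  assert (HE2' : g00*t0*w0+g01*(t0*w1+t1*w0)+g11*t1*w1 = -1) by (rewrite <- HE2; ring).
  assert (HE1' : w0 * w0 * g00 + w0 * w1 * g01 + w1 * w0 * g01 + w1 * w1 * g11 = 0) by (rewrite <- HE1; ring).
  clear HC0 HE1 HE2.
  assert (HD : t0*w1 - t1*w0 <> 0).
  { intro HD0.
    assert (A0 : t0 * (g00*t0*w0+g01*(t0*w1+t1*w0)+g11*t1*w1) = w0 * (g00*t0*t0+2*g01*t0*t1+g11*t1*t1) + g01*t0*(t0*w1-t1*w0) + g11*t1*(t0*w1-t1*w0)) by ring.
    assert (A1 : t1 * (g00*t0*w0+g01*(t0*w1+t1*w0)+g11*t1*w1) = w1 * (g00*t0*t0+2*g01*t0*t1+g11*t1*t1) - g00*t0*(t0*w1-t1*w0) - g01*t1*(t0*w1-t1*w0)) by ring.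
    rewrite HE2', HC', HD0 in A0, A1.
    destruct Ht; lra. }
  exists t0, t1. split; [exact HD|].
  set (D := t0*w1 - t1*w0) in *.
  assert (Hg00 : g00 = 2*w1*t1/(D*D)).
  { assert (H: g00 * (D*D) = w1*w1*(g00*t0*t0+2*g01*t0*t1+g11*t1*t1) - 2*w1*t1*(g00*t0*w0+g01*(t0*w1+t1*w0)+g11*t1*w1) + t1*t1*(w0 * w0 * g00 + w0 * w1 * g01 + w1 * w0 * g01 + w1 * w1 * g11)) by (unfold D; ring).
    rewrite HC', HE2', HE1' in H. field_simplify_eq; [lra| exact HD]. }
  assert (Hg11 : g11 = 2*w0*t0/(D*D)).
  { assert (H: g11 * (D*D) = w0*w0*(g00*t0*t0+2*g01*t0*t1+g11*t1*t1) - 2*w0*t0*(g00*t0*w0+g01*(t0*w1+t1*w0)+g11*t1*w1) + t0*t0*(w0 * w0 * g00 + w0 * w1 * g01 + w1 * w0 * g01 + w1 * w1 * g11)) by (unfold D; ring).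
    rewrite HC', HE2', HE1' in H. field_simplify_eq; [lra| exact HD]. }
  assert (Hg01 : g01 = -(w1*t0+t1*w0)/(D*D)).
  { assert (H: g01 * (D*D) = -w1*w0*(g00*t0*t0+2*g01*t0*t1+g11*t1*t1) + (w1*t0+t1*w0)*(g00*t0*w0+g01*(t0*w1+t1*w0)+g11*t1*w1) - t1*t0*(w0 * w0 * g00 + w0 * w1 * g01 + w1 * w0 * g01 + w1 * w1 * g11)) by (unfold D; ring).
    rewrite HC', HE2', HE1' in H. field_simplify_eq; [lra| exact HD]. }
  repeat split; auto.
  - rewrite Hf0, Hg00, Hg01. unfold D. field. exact HD.
  - rewrite Hf1, Hg11, Hg01. unfold D. field. exact HD.
Qed.

Definition nfE : E := EA (EM (fE 0) (fE 0)) (EM (fE 1) (fE 1)).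
Definition YE (i : nat) : E := EM (EN (fE i)) (EI nfE).
Definition WformE (i : nat) : E :=
  EA (YE i) (EM (EM (EC (/2)) (quad (YE 0) (YE 1) (YE 0) (YE 1))) (TcE i)).

Lemma wform (r : nat -> nat -> nat -> nat -> R) (rz : nat -> nat -> R) (rw : nat -> R) :
  ev (symV r) rz rw detE <> 0 ->
  ev (symV r) rz rw CE = 0 -> ev (symV r) rz rw E1E = 0 -> ev (symV r) rz rw E2E = -1 ->
  (ev (symV r) rz rw (TcE 0) <> 0 \/ ev (symV r) rz rw (TcE 1) <> 0) ->
  ev (symV r) rz rw nfE <> 0 /\
  rw 0%nat = ev (symV r) rz rw (WformE 0) /\ rw 1%nat = ev (symV r) rz rw (WformE 1).
Proof.
  intros Hdet HC HE1 HE2 Ht.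
  destruct (param r rz rw Hdet HC HE1 HE2 Ht) as [t0 [t1 [HD [H1 [H2 [H3 [H4 H5]]]]]]].
  assert (Htt : t0 * t0 + t1 * t1 <> 0).
  { intro H0. assert (t0 = 0) by nra. assert (t1 = 0) by nra. subst.
    apply HD. ring. }
  cbn -[Rinv]. unfold symV; cbn -[Rinv].
  rewrite H1, H2, H3, H4, H5.
  set (w0 := rw 0%nat) in *. set (w1 := rw 1%nat) in *.
  clearbody w0 w1.
  assert (Hsq : 2 * w1 * t1 * (2 * w0 * t0) + - (- (w1 * t0 + t1 * w0) * - (w1 * t0 + t1 * w0)) <> 0).
  { intro H0. apply HD. assert (E : (t0*w1-t1*w0)*(t0*w1-t1*w0) = 0) by nra.
    destruct (Rmult_integral _ _ E); auto. }
  assert (Htt' : t1 * t1 + - t0 * - t0 <> 0) by (intro; apply Htt; nra).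
  split; [|split].
  - intro H0. apply Htt.
    match type of H0 with ?L = 0 => transitivity (L * ((t0*w1-t1*w0)*(t0*w1-t1*w0))); [field; exact HD | rewrite H0; ring] end.
  - field. auto.
  - field. auto.
Qed.

Definition C3E : E :=
  ES (EA (EM (GE 1 1) (EM (fE 0) (fE 0))) (EM (GE 0 0) (EM (fE 1) (fE 1))))
     (EM (EC 2) (EM (GE 0 1) (EM (fE 0) (fE 1)))).
Definition PjE (a b : nat) : E := EA (EM (TcE 0) (EV a b 1 0)) (EM (TcE 1) (EV a b 0 1)).
Definition hE (a b : nat) : E := ES (EZ a b) (PjE a b).
Definition WW (F : nat -> nat -> E) : E :=
  EA (EA (EA (EM (EM (EW 0) (EW 0)) (F 0%nat 0%nat)) (EM (EM (EW 0) (EW 1)) (F 0%nat 1%nat)))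
         (EM (EM (EW 1) (EW 0)) (F 1%nat 0%nat))) (EM (EM (EW 1) (EW 1)) (F 1%nat 1%nat)).
Definition AE2 : E := WW (fun i j => hE (jxa i + jxa j) (jxb i + jxb j)).
Definition E2E2 : E := EA (EM (fE 0) (EW 0)) (EM (fE 1) (EW 1)).
Definition dC3W : E := EA (EM (EW 0) (dE 0 C3E)) (EM (EW 1) (dE 1 C3E)).
Definition hess3 (l m : nat) : E :=
  ES (dE l (dE m C3E)) (EA (EM (ChrE 0 l m) (dE 0 C3E)) (EM (ChrE 1 l m) (dE 1 C3E))).
Definition HC3 : E := WW hess3.
Definition CR : E := WW (fun l m => EM (dE l C3E) (dE m detE)).

Lemma AE_AE2 (r : nat -> nat -> nat -> nat -> R) (rz : nat -> nat -> R) (rw : nat -> R) :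
  ev (symV r) rz rw detE <> 0 -> ev (symV r) rz rw AE = ev (symV r) rz rw AE2.
Proof.
  intros Hd. cbn -[Rinv] in *. unfold symV in *. cbn -[Rinv] in *.
  field. exact Hd.
Qed.

Lemma E2_E22 (r : nat -> nat -> nat -> nat -> R) (rz : nat -> nat -> R) (rw : nat -> R) :
  ev (symV r) rz rw detE <> 0 -> ev (symV r) rz rw E2E = ev (symV r) rz rw E2E2.
Proof.
  intros Hd. cbn -[Rinv] in *. unfold symV in *. cbn -[Rinv] in *.
  field. exact Hd.
Qed.

Lemma CE_C3 (r : nat -> nat -> nat -> nat -> R) (rz : nat -> nat -> R) (rw : nat -> R) :
  ev (symV r) rz rw detE <> 0 -> ev (symV r) rz rw C3E = ev (symV r) rz rw detE * ev (symV r) rz rw CE.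
Proof.
  intros Hd. cbn -[Rinv] in *. unfold symV in *. cbn -[Rinv] in *.
  field. exact Hd.
Qed.

Lemma alg (r : nat -> nat -> nat -> nat -> R) (rz : nat -> nat -> R) (rw dw : nat -> R) :
  ev (symV r) rz rw detE <> 0 ->
  ev (symV r) rz rw CE = 0 -> ev (symV r) rz rw E1E = 0 -> ev (symV r) rz rw E2E = -1 ->
  (ev (symV r) rz rw (TcE 0) <> 0 \/ ev (symV r) rz rw (TcE 1) <> 0) ->
  evD (symV r) rz rw (ev (symV r) rz rw (TcE 0)) (ev (symV r) rz rw (TcE 1)) dw AE2 - ev (symV r) rz rw KE =
    / 2 * ev (symV r) rz rw HC3 / ev (symV r) rz rw detE
    - ev (symV r) rz rw CR / (ev (symV r) rz rw detE * ev (symV r) rz rw detE)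
    + 2 * ev (symV r) rz rw AE2 * ev (symV r) rz rw dC3W / ev (symV r) rz rw detE
    - / 2 * ev (symV r) rz rw dC3W / ev (symV r) rz rw detE * evD (symV r) rz rw (ev (symV r) rz rw (TcE 0)) (ev (symV r) rz rw (TcE 1)) dw E1E
    - 2 * ev (symV r) rz rw AE2 * evD (symV r) rz rw (ev (symV r) rz rw (TcE 0)) (ev (symV r) rz rw (TcE 1)) dw E2E2.
Proof.
  intros Hdet HC0 HE1 HE2 Ht.
  destruct (param r rz rw Hdet HC0 HE1 HE2 Ht) as [s0 [s1 [HD [H1 [H2 [H3 [H4 H5]]]]]]].
  clear Hdet HC0 HE1 HE2 Ht.
  cbn -[Rinv] in *.
  unfold symV in *; cbn -[Rinv] in *.
  rewrite H1, H2, H3, H4, H5.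
  set (w0 := rw 0%nat) in *. set (w1 := rw 1%nat) in *.
  set (dw0 := dw 0%nat) in *. set (dw1 := dw 1%nat) in *.
  clearbody w0 w1 dw0 dw1.
  assert (HDD : (s0 * w1 - s1 * w0) * (s0 * w1 - s1 * w0) <> 0) by (intro H0; apply HD; destruct (Rmult_integral _ _ H0); auto).
  unfold Rdiv.
  remember (/ (s0 * w1 - s1 * w0)) as e eqn:He.
  assert (Hee : / ((s0 * w1 - s1 * w0) * (s0 * w1 - s1 * w0)) = e * e) by (rewrite He; field; exact HD).
  rewrite Hee.
  assert (Hdt : / (2 * w1 * s1 * (e * e) * (2 * w0 * s0 * (e * e)) +
     - (- (w1 * s0 + s1 * w0) * (e * e) * (- (w1 * s0 + s1 * w0) * (e * e)))) = - ((s0 * w1 - s1 * w0) * (s0 * w1 - s1 * w0))).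
  { rewrite He. field. split; [exact HD|]. intro H0. apply HD.
    assert (E : (s0*w1-s1*w0)*(s0*w1-s1*w0) = 0) by nra. destruct (Rmult_integral _ _ E); auto. }
  assert (Hdt2 : / ((2 * w1 * s1 * (e * e) * (2 * w0 * s0 * (e * e)) +
     - (- (w1 * s0 + s1 * w0) * (e * e) * (- (w1 * s0 + s1 * w0) * (e * e)))) *
     (2 * w1 * s1 * (e * e) * (2 * w0 * s0 * (e * e)) +
     - (- (w1 * s0 + s1 * w0) * (e * e) * (- (w1 * s0 + s1 * w0) * (e * e)))))
     = ((s0 * w1 - s1 * w0) * (s0 * w1 - s1 * w0)) * ((s0 * w1 - s1 * w0) * (s0 * w1 - s1 * w0))).
  { rewrite Rinv_mult, Hdt. ring. }
  rewrite Hdt2, Hdt.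
  clear H1 H2 H3 H4 H5 Hdt Hee Hdt2.
  apply Rminus_diag_uniq.
  Time ring_simplify.
  subst e.
  Time field.
  exact HD.
Qed.

Lemma HC3_0 (rv : nat -> nat -> nat -> nat -> R) rz rw :
  (forall k, ev rv rz rw (dE k C3E) = 0) ->
  (forall l m, ev rv rz rw (dE l (dE m C3E)) = 0) ->
  ev rv rz rw HC3 = 0 /\ ev rv rz rw CR = 0 /\ ev rv rz rw dC3W = 0.
Proof.
  intros H1 H2. split; [|split].
  - cbn [ev HC3 WW hess3 ES]. rewrite !H1, !H2. ring.
  - cbn [ev CR WW]. rewrite !H1. ring.
  - cbn [ev dC3W]. rewrite !H1. ring.
Qed.

From Coquelicot Require Import Coquelicot.
Open Scope R_scope.

Lemma dpl_loc (f g : R -> R) (x l d : R) : 0 < d ->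
  (forall y, Rabs (y - x) < d -> f y = g y) ->
  derivable_pt_lim f x l -> derivable_pt_lim g x l.
Proof.
  intros Hd Hfg H eps Heps.
  destruct (H eps Heps) as [del Hdel].
  assert (Hm : 0 < Rmin del d) by (apply Rmin_pos; [apply cond_pos | lra]).
  exists (mkposreal _ Hm). intros h Hh Hhl. simpl in Hhl.
  rewrite <- (Hfg (x + h)), <- (Hfg x).
  - apply Hdel; auto. eapply Rlt_le_trans; [exact Hhl| apply Rmin_l].
  - replace (x - x) with 0 by ring. rewrite Rabs_R0; lra.
  - replace (x + h - x) with h by ring. eapply Rlt_le_trans; [exact Hhl| apply Rmin_r].
Qed.

Definition line (i : nat) (p : pt) (s : R) : pt :=
  match i with O => (s, snd p) | _ => (fst p, s) end.
Definition crd (i : nat) (p : pt) : R := match i with O => fst p | _ => snd p end.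

Lemma pd_eq (i : nat) (f : pt -> R) (p : pt) (l : R) :
  derivable_pt_lim (fun s => f (line i p s)) (crd i p) l -> pd i f p = l.
Proof.
  intros H. destruct i as [|i]; simpl in *.
  - unfold pd1. destruct excluded_middle_informative as [He|He].
    + destruct (constructive_indefinite_description _ He) as [l' Hl']; simpl.
      eapply uniqueness_limite; eauto.
    + exfalso; apply He; eauto.
  - unfold pd2. destruct excluded_middle_informative as [He|He].
    + destruct (constructive_indefinite_description _ He) as [l' Hl']; simpl.
      eapply uniqueness_limite; eauto.
    + exfalso; apply He; eauto.
Qed.

Lemma pd_none (i : nat) (f : pt -> R) (p : pt) :
  ~ (exists l, derivable_pt_lim (fun s => f (line i p s)) (crd i p) l) -> pd i f p = 0.
Proof.
  intros H. destruct i as [|i]; simpl in *.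
  - unfold pd1. destruct excluded_middle_informative as [He|He]; [exfalso; auto|reflexivity].
  - unfold pd2. destruct excluded_middle_informative as [He|He]; [exfalso; auto|reflexivity].
Qed.

Lemma open_line (U : pt -> Prop) (p : pt) : open2 U -> U p ->
  exists r, 0 < r /\ forall i s, Rabs (s - crd i p) < r -> U (line i p s).
Proof.
  intros HU Hp. destruct (HU p Hp) as [r [Hr Hq]]. exists r; split; auto.
  intros i s Hs. destruct i; simpl in *; apply Hq; simpl; auto;
  replace (_ - _) with 0 by ring; rewrite Rabs_R0; lra.
Qed.

Lemma pd_loc (U : pt -> Prop) (h1 h2 : pt -> R) (i : nat) (p : pt) :
  open2 U -> U p -> (forall q, U q -> h1 q = h2 q) -> pd i h1 p = pd i h2 p.
Proof.
  intros HU Hp Heq. destruct (open_line U p HU Hp) as [r [Hr Hl]].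
  destruct (classic (exists l, derivable_pt_lim (fun s => h1 (line i p s)) (crd i p) l)) as [[l H]|Hn].
  - rewrite (pd_eq _ _ _ l H). symmetry. apply pd_eq.
    apply (dpl_loc (fun s => h1 (line i p s)) _ _ _ r Hr); auto.
  - rewrite (pd_none _ _ _ Hn). symmetry. apply pd_none.
    intros [l H]. apply Hn. exists l. apply (dpl_loc (fun s => h2 (line i p s)) _ _ _ r Hr); auto.
    intros y Hy; symmetry; auto.
Qed.

Lemma itd_app (w1 w2 : list nat) (f : pt -> R) : itd (w1 ++ w2) f = itd w1 (itd w2 f).
Proof. induction w1; simpl; congruence. Qed.

Lemma smooth_itd (U : pt -> Prop) (f : pt -> R) (w : list nat) :
  smooth_on U f -> smooth_on U (itd w f).
Proof. intros H w' p Hp. rewrite <- itd_app. apply H; auto. Qed.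

Lemma smooth_der (U : pt -> Prop) (f : pt -> R) (i : nat) (p : pt) :
  smooth_on U f -> U p ->
  derivable_pt_lim (fun s => f (line i p s)) (crd i p) (pd i f p).
Proof.
  intros H Hp. destruct (H nil p Hp) as [_ [[l0 H0] [l1 H1]]].
  destruct i as [|i].
  - rewrite (pd_eq 0 f p l0 H0); auto.
  - rewrite (pd_eq (S i) f p l1 H1); auto.
Qed.

Lemma Derive_of_dpl f x l : derivable_pt_lim f x l -> Derive f x = l.
Proof. intros H. apply is_derive_unique. apply is_derive_Reals. exact H. Qed.

Lemma ex_derive_of_dpl f x l : derivable_pt_lim f x l -> ex_derive f x.
Proof. intros H. exists l. apply is_derive_Reals. exact H. Qed.

Lemma schwarz_pt (U : pt -> Prop) (h : pt -> R) (p : pt) :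
  open2 U -> smooth_on U h -> U p -> pd 0 (pd 1 h) p = pd 1 (pd 0 h) p.
Proof.
  intros HU Hs Hp. destruct p as [x y].
  destruct (HU (x, y) Hp) as [r [Hr HUr]]. simpl in HUr.
  assert (Hr2 : 0 < r / 2) by lra.
  assert (HinU : forall z t, Rabs (z - x) < r -> Rabs (t - y) < r -> U (z, t)).
  { intros z t Hz Ht. apply HUr; simpl; auto. }
  assert (Htri : forall a b c, Rabs (a - b) < r/2 -> Rabs (b - c) < r / 2 -> Rabs (a - c) < r).
  { intros a b c H1 H2. replace (a - c) with ((a - b) + (b - c)) by ring.
    eapply Rle_lt_trans; [apply Rabs_triang|]. lra. }
  assert (Hsm1 : smooth_on U (pd 1 h)) by exact (smooth_itd U h (cons 1%nat nil) Hs).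
  assert (Hsm0 : smooth_on U (pd 0 h)) by exact (smooth_itd U h (cons 0%nat nil) Hs).
  assert (Ha : forall z t, U (z, t) -> Derive (fun s => h (z, s)) t = pd 1 h (z, t)).
  { intros z t Hzt. apply Derive_of_dpl. exact (smooth_der U h 1 (z, t) Hs Hzt). }
  assert (Ha' : forall z t, U (z, t) -> Derive (fun s => h (s, t)) z = pd 0 h (z, t)).
  { intros z t Hzt. apply Derive_of_dpl. exact (smooth_der U h 0 (z, t) Hs Hzt). }
  assert (Hb : forall u v, Rabs (u - x) < r/2 -> Rabs (v - y) < r/2 ->
     derivable_pt_lim (fun z => Derive (fun t => h (z, t)) v) u (pd 0 (pd 1 h) (u, v))).
  { intros u v Hu Hv.
    apply (dpl_loc (fun z => pd 1 h (z, v)) _ _ _ (r/2) Hr2).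
    - intros z Hz. symmetry. apply Ha. apply HinU; [apply (Htri _ u); auto | lra].
    - exact (smooth_der U (pd 1 h) 0 (u, v) Hsm1 (HinU u v ltac:(lra) ltac:(lra))). }
  assert (Hb' : forall u v, Rabs (u - x) < r/2 -> Rabs (v - y) < r/2 ->
     derivable_pt_lim (fun z => Derive (fun t => h (t, z)) u) v (pd 1 (pd 0 h) (u, v))).
  { intros u v Hu Hv.
    apply (dpl_loc (fun z => pd 0 h (u, z)) _ _ _ (r/2) Hr2).
    - intros z Hz. symmetry. apply Ha'. apply HinU; [lra | apply (Htri _ v); auto].
    - exact (smooth_der U (pd 0 h) 1 (u, v) Hsm0 (HinU u v ltac:(lra) ltac:(lra))). }
  assert (H0x : Rabs (x - x) < r/2) by (replace (x - x) with 0 by ring; rewrite Rabs_R0; lra).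
  assert (H0y : Rabs (y - y) < r/2) by (replace (y - y) with 0 by ring; rewrite Rabs_R0; lra).
  rewrite <- (Derive_of_dpl _ _ _ (Hb x y H0x H0y)).
  rewrite <- (Derive_of_dpl _ _ _ (Hb' x y H0x H0y)).
  apply (Schwarz (fun u v => h (u, v))).
  - exists (mkposreal _ Hr2). intros u v Hu Hv; simpl in Hu, Hv.
    assert (HU' : U (u, v)) by (apply HinU; lra).
    repeat split.
    + exact (ex_derive_of_dpl _ _ _ (smooth_der U h 0 (u, v) Hs HU')).
    + exact (ex_derive_of_dpl _ _ _ (smooth_der U h 1 (u, v) Hs HU')).
    + exact (ex_derive_of_dpl _ _ _ (Hb u v Hu Hv)).
    + exact (ex_derive_of_dpl _ _ _ (Hb' u v Hu Hv)).
  - intros eps. destruct (Hs (cons 0%nat (cons 1%nat nil)) (x, y) Hp) as [Hc _].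
    destruct (Hc eps (cond_pos eps)) as [del [Hdel Hcd]].
    assert (Hm : 0 < Rmin del (r/2)) by (apply Rmin_pos; lra).
    exists (mkposreal _ Hm). intros u v Hu Hv; simpl in Hu, Hv.
    assert (Hu1 := Rlt_le_trans _ _ _ Hu (Rmin_l _ _)).
    assert (Hu2 := Rlt_le_trans _ _ _ Hu (Rmin_r _ _)).
    assert (Hv1 := Rlt_le_trans _ _ _ Hv (Rmin_l _ _)).
    assert (Hv2 := Rlt_le_trans _ _ _ Hv (Rmin_r _ _)).
    rewrite (Derive_of_dpl _ _ _ (Hb u v Hu2 Hv2)), (Derive_of_dpl _ _ _ (Hb x y H0x H0y)).
    apply (Hcd (u, v)); simpl; auto.
  - intros eps. destruct (Hs (cons 1%nat (cons 0%nat nil)) (x, y) Hp) as [Hc _].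
    destruct (Hc eps (cond_pos eps)) as [del [Hdel Hcd]].
    assert (Hm : 0 < Rmin del (r/2)) by (apply Rmin_pos; lra).
    exists (mkposreal _ Hm). intros u v Hu Hv; simpl in Hu, Hv.
    assert (Hu1 := Rlt_le_trans _ _ _ Hu (Rmin_l _ _)).
    assert (Hu2 := Rlt_le_trans _ _ _ Hu (Rmin_r _ _)).
    assert (Hv1 := Rlt_le_trans _ _ _ Hv (Rmin_l _ _)).
    assert (Hv2 := Rlt_le_trans _ _ _ Hv (Rmin_r _ _)).
    rewrite (Derive_of_dpl _ _ _ (Hb' u v Hu2 Hv2)), (Derive_of_dpl _ _ _ (Hb' x y H0x H0y)).
    apply (Hcd (u, v)); simpl; auto.
Qed.

Lemma D_plus (f g : R -> R) x a b : is_derive f x a -> is_derive g x b ->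
  is_derive (fun t => f t + g t) x (a + b).
Proof. intros; exact (is_derive_plus f g x a b H H0). Qed.
Lemma D_mult (f g : R -> R) x a b : is_derive f x a -> is_derive g x b ->
  is_derive (fun t => f t * g t) x (a * g x + f x * b).
Proof. intros; exact (is_derive_mult f g x a b H H0 Rmult_comm). Qed.
Lemma D_opp (f : R -> R) x a : is_derive f x a -> is_derive (fun t => - f t) x (- a).
Proof. intros; exact (is_derive_opp f x a H). Qed.
Lemma D_const (c x : R) : is_derive (fun _ => c) x 0.
Proof. exact (is_derive_const c x). Qed.
Lemma D_inv (f : R -> R) x a : is_derive f x a -> f x <> 0 ->
  is_derive (fun t => / f t) x (- a * / (f x * f x)).
Proof. intros H H0. assert (H1 := is_derive_inv f x a H H0).
  replace (- a * / (f x * f x)) with (- a / f x ^ 2) by (unfold Rdiv; f_equal; f_equal; ring).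
  exact H1. Qed.
Lemma D_ext (f g : R -> R) (x a : R) : (forall t, f t = g t) -> is_derive f x a -> is_derive g x a.
Proof. intros; eapply is_derive_ext; eauto. Qed.
Lemma D_eqv (f : R -> R) (x a b : R) : a = b -> is_derive f x a -> is_derive f x b.
Proof. intros ->; auto. Qed.
Lemma D_R f x l : is_derive f x l <-> derivable_pt_lim f x l.
Proof. apply is_derive_Reals. Qed.

Lemma D_lin (g : R -> R) (c b l : R) :
  is_derive g c l -> is_derive (fun s => g (c + s * b)) 0 (l * b).
Proof.
  intros Hg.
  assert (Hg' : is_derive g (c + 0 * b) l) by (replace (c + 0 * b) with c by ring; exact Hg).
  assert (Hl : is_derive (fun s => c + s * b) 0 b) by (auto_derive; auto; ring).
  assert (H := is_derive_comp g (fun s => c + s * b) 0 l b Hg' Hl).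
  eapply D_eqv; [|exact H]. simpl. unfold scal; simpl. unfold mult; simpl. ring.
Qed.

Definition Dir (v : R * R) (p : pt) (h : pt -> R) (l : R) : Prop :=
  is_derive (fun s => h (fst p + s * fst v, snd p + s * snd v)) 0 l.

Lemma dir_smooth (U : pt -> Prop) (h : pt -> R) (p : pt) (v : R * R) :
  open2 U -> smooth_on U h -> U p -> Dir v p h (fst v * pd 0 h p + snd v * pd 1 h p).
Proof.
  intros HU Hs Hp. destruct p as [x y]. destruct v as [a b]. unfold Dir; cbn [fst snd].
  destruct (HU (x, y) Hp) as [r [Hr HUr]]. simpl in HUr.
  assert (Hpsi : is_derive (fun s => h (x, y + s * b)) 0 (pd 1 h (x, y) * b)).
  { apply (D_lin (fun t => h (x, t))). apply D_R. exact (smooth_der U h 1 (x, y) Hs Hp). }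
  assert (HF : is_derive (fun s => h (x + s * a, y + s * b) - h (x, y + s * b)) 0 (pd 0 h (x, y) * a)).
  { apply D_R. intros eps Heps.
    destruct (Hs (cons 0%nat nil) (x, y) Hp) as [Hc _]. simpl in Hc.
    set (e' := eps / (Rabs a + 1)).
    assert (He' : 0 < e') by (unfold e'; apply Rdiv_lt_0_compat; [lra| pose proof (Rabs_pos a); lra]).
    destruct (Hc e' He') as [del [Hdel Hcd]].
    set (m := Rmin del r / (Rabs a + Rabs b + 1)).
    assert (Hab : 0 < Rabs a + Rabs b + 1) by (pose proof (Rabs_pos a); pose proof (Rabs_pos b); lra).
    assert (Hm0 : 0 < Rmin del r) by (apply Rmin_pos; lra).
    assert (Hm : 0 < m) by (unfold m; apply Rdiv_lt_0_compat; lra).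
    exists (mkposreal m Hm). intros s Hs0 Hsm. simpl in Hsm.
    assert (Hsa : Rabs (s * a) < Rmin del r).
    { rewrite Rabs_mult. unfold m in Hsm.
      apply Rle_lt_trans with (Rabs s * (Rabs a + Rabs b + 1)).
      - apply Rmult_le_compat_l; [apply Rabs_pos| pose proof (Rabs_pos b); lra].
      - apply (Rmult_lt_compat_r (Rabs a + Rabs b + 1)) in Hsm; [|lra].
        unfold Rdiv in Hsm. rewrite Rmult_assoc, Rinv_l in Hsm by lra. lra. }
    assert (Hsb : Rabs (s * b) < Rmin del r).
    { rewrite Rabs_mult. unfold m in Hsm.
      apply Rle_lt_trans with (Rabs s * (Rabs a + Rabs b + 1)).
      - apply Rmult_le_compat_l; [apply Rabs_pos| pose proof (Rabs_pos a); lra].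
      - apply (Rmult_lt_compat_r (Rabs a + Rabs b + 1)) in Hsm; [|lra].
        unfold Rdiv in Hsm. rewrite Rmult_assoc, Rinv_l in Hsm by lra. lra. }
    assert (Hmd := Rmin_l del r). assert (Hmr := Rmin_r del r).
    set (yy := y + s * b).
    assert (Hyy : Rabs (yy - y) < Rmin del r) by (unfold yy; replace (y + s * b - y) with (s * b) by ring; exact Hsb).
    assert (Hin : forall u, Rmin x (x + s * a) <= u <= Rmax x (x + s * a) -> Rabs (u - x) <= Rabs (s * a)).
    { intros u Hu. unfold Rmin, Rmax in Hu. destruct (Rle_dec x (x + s * a)).
      - rewrite (Rabs_right (s * a)) by lra. apply Rabs_le; lra.
      - rewrite (Rabs_left (s * a)) by lra. apply Rabs_le; lra. }
    assert (HU' : forall u, Rmin x (x + s * a) <= u <= Rmax x (x + s * a) -> U (u, yy)).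
    { intros u Hu. apply HUr; simpl; [specialize (Hin u Hu); lra | lra]. }
    destruct (MVT_gen (fun u => h (u, yy)) x (x + s * a) (fun u => pd 0 h (u, yy))) as [c [Hc1 Hc2]].
    { intros u Hu. apply D_R. exact (smooth_der U h 0 (u, yy) Hs (HU' u (conj (Rlt_le _ _ (proj1 Hu)) (Rlt_le _ _ (proj2 Hu))))). }
    { intros u Hu. apply derivable_continuous_pt. exists (pd 0 h (u, yy)).
      exact (smooth_der U h 0 (u, yy) Hs (HU' u Hu)). }
    replace (0 + s) with s by ring.
    replace (x + 0 * a) with x by ring. replace (y + 0 * b) with y by ring.
    replace (h (x, y) - h (x, y)) with 0 by ring.
    fold yy. rewrite Rminus_0_r. rewrite Hc2.
    replace ((pd 0 h (c, yy) * (x + s * a - x)) / s - pd 0 h (x, y) * a)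
      with (a * (pd 0 h (c, yy) - pd 0 h (x, y))) by (field; exact Hs0).
    rewrite Rabs_mult.
    assert (Hcc : Rabs (pd 0 h (c, yy) - pd 0 h (x, y)) < e').
    { apply (Hcd (c, yy)); simpl.
      - specialize (Hin c Hc1). lra.
      - lra. }
    apply Rle_lt_trans with (Rabs a * e').
    - apply Rmult_le_compat_l; [apply Rabs_pos| lra].
    - unfold e'. assert (0 <= Rabs a) by apply Rabs_pos.
      apply Rlt_le_trans with ((Rabs a + 1) * (eps / (Rabs a + 1))).
      + apply Rmult_lt_compat_r; [exact He'| lra].
      + right. field. lra. }
  apply (D_eqv _ _ (pd 0 h (x, y) * a + pd 1 h (x, y) * b)); [ring|].
  apply (D_ext (fun s => (h (x + s * a, y + s * b) - h (x, y + s * b)) + h (x, y + s * b))).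
  - intros t; ring.
  - exact (D_plus _ _ _ _ _ HF Hpsi).
Qed.

Lemma dir_loc (U : pt -> Prop) (h1 h2 : pt -> R) (p : pt) (v : R * R) (l : R) :
  open2 U -> U p -> (forall q, U q -> h1 q = h2 q) -> Dir v p h1 l -> Dir v p h2 l.
Proof.
  intros HU Hp Heq H. destruct (HU p Hp) as [r [Hr HUr]].
  destruct v as [a b]. unfold Dir in *; cbn [fst snd] in *.
  assert (Hab : 0 < Rabs a + Rabs b + 1) by (pose proof (Rabs_pos a); pose proof (Rabs_pos b); lra).
  set (d := r / (Rabs a + Rabs b + 1)).
  assert (Hd : 0 < d) by (unfold d; apply Rdiv_lt_0_compat; lra).
  apply D_R. apply (dpl_loc (fun s => h1 (fst p + s * a, snd p + s * b)) _ 0 l d Hd).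
  - intros y Hy. apply Heq. apply HUr; simpl.
    + replace (fst p + y * a - fst p) with (y * a) by ring. rewrite Rabs_mult.
      replace (y - 0) with y in Hy by ring.
      apply Rle_lt_trans with (Rabs y * (Rabs a + Rabs b + 1)).
      * apply Rmult_le_compat_l; [apply Rabs_pos| pose proof (Rabs_pos b); lra].
      * apply (Rmult_lt_compat_r (Rabs a + Rabs b + 1)) in Hy; [|lra].
        unfold d, Rdiv in Hy. rewrite Rmult_assoc, Rinv_l in Hy by lra. lra.
    + replace (snd p + y * b - snd p) with (y * b) by ring. rewrite Rabs_mult.
      replace (y - 0) with y in Hy by ring.
      apply Rle_lt_trans with (Rabs y * (Rabs a + Rabs b + 1)).
      * apply Rmult_le_compat_l; [apply Rabs_pos| pose proof (Rabs_pos a); lra].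
      * apply (Rmult_lt_compat_r (Rabs a + Rabs b + 1)) in Hy; [|lra].
        unfold d, Rdiv in Hy. rewrite Rmult_assoc, Rinv_l in Hy by lra. lra.
  - apply D_R. exact H.
Qed.

Lemma dir_const (c : R) (p : pt) (v : R * R) : Dir v p (fun _ => c) 0.
Proof. unfold Dir. apply D_const. Qed.

Lemma dir_uniq (h : pt -> R) (p : pt) (v : R * R) (l1 l2 : R) :
  Dir v p h l1 -> Dir v p h l2 -> l1 = l2.
Proof. unfold Dir. intros H1 H2. rewrite <- (is_derive_unique _ _ _ H1). exact (is_derive_unique _ _ _ H2). Qed.

Lemma sumR_plus (m : nat) (f g : nat -> R) : sumR m (fun i => f i + g i) = sumR m f + sumR m g.
Proof. induction m; simpl; [ring| rewrite IHm; ring]. Qed.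

Lemma D_sumR (m : nat) (F : R -> nat -> R) (dF : nat -> R) (x : R) :
  (forall k, is_derive (fun s => F s k) x (dF k)) ->
  is_derive (fun s => sumR m (F s)) x (sumR m dF).
Proof.
  intros H. induction m; simpl.
  - apply D_const.
  - apply D_plus; auto.
Qed.

Lemma D_minner (m : nat) (F G : R -> vec) (dF dG : vec) (x : R) :
  (forall k, is_derive (fun s => F s k) x (dF k)) ->
  (forall k, is_derive (fun s => G s k) x (dG k)) ->
  is_derive (fun s => minner m (F s) (G s)) x (minner m dF (G x) + minner m (F x) dG).
Proof.
  intros HF HG.
  assert (H1 : is_derive (fun s => - (F s O * G s O)) x (- (dF O * G x O + F x O * dG O))).
  { apply D_opp. apply D_mult; [apply HF | apply HG]. }
  assert (H2 : is_derive (fun s => sumR m (fun i => F s (S i) * G s (S i))) x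
     (sumR m (fun i => dF (S i) * G x (S i) + F x (S i) * dG (S i)))).
  { apply (D_sumR m (fun s i => F s (S i) * G s (S i))). intros k. apply D_mult; [apply HF|apply HG]. }
  assert (H3 := D_plus _ _ _ _ _ H1 H2).
  unfold minner.
  eapply D_ext; [|eapply D_eqv; [|exact H3]].
  - intros t. simpl. ring.
  - rewrite sumR_plus. ring.
Qed.

Lemma D_minner_c (m : nat) (F : R -> vec) (dF : vec) (Z : vec) (x : R) :
  (forall k, is_derive (fun s => F s k) x (dF k)) ->
  is_derive (fun s => minner m (F s) Z) x (minner m dF Z).
Proof.
  intros HF.
  assert (H := D_minner m F (fun _ => Z) dF (fun _ => 0) x HF (fun k => D_const (Z k) x)).
  eapply D_eqv; [|exact H].
  unfold minner. simpl.
  assert (E : forall m', sumR m' (fun i => F x (S i) * 0) = 0).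
  { induction m'; simpl; [ring| rewrite IHm'; ring]. }
  rewrite E. ring.
Qed.

Definition word (a b : nat) : list nat := repeat 0%nat a ++ repeat 1%nat b.

Lemma J_swap (U : pt -> Prop) (f : pt -> R) (a b : nat) :
  open2 U -> smooth_on U f ->
  forall q, U q -> itd (1%nat :: word a b) f q = itd (word a (S b)) f q.
Proof.
  intros HU Hs. induction a; intros q Hq.
  - reflexivity.
  - change (pd 1 (pd 0 (itd (word a b) f)) q = pd 0 (itd (word a (S b)) f) q).
    rewrite <- (schwarz_pt U (itd (word a b) f) q HU (smooth_itd U f _ Hs) Hq).
    apply (pd_loc U); [exact HU | exact Hq | exact IHa].
Qed.

Lemma sumR_ext (m : nat) (f g : nat -> R) : (forall i, f i = g i) -> sumR m f = sumR m g.
Proof. intros H; induction m; simpl; [ring| rewrite IHm, H; ring]. Qed.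

Lemma minner_lin_l (m : nat) (a b : R) (A B C : vec) :
  minner m (fun k => a * A k + b * B k) C = a * minner m A C + b * minner m B C.
Proof.
  unfold minner.
  assert (E : forall m', sumR m' (fun i => (a * A (S i) + b * B (S i)) * C (S i)) =
     a * sumR m' (fun i => A (S i) * C (S i)) + b * sumR m' (fun i => B (S i) * C (S i))).
  { induction m'; simpl; [ring| rewrite IHm'; ring]. }
  rewrite E. ring.
Qed.

Lemma minner_sym (m : nat) (A B : vec) : minner m A B = minner m B A.
Proof.
  unfold minner. f_equal; [ring|]. apply sumR_ext. intros; ring.
Qed.

Lemma minner_lin_r (m : nat) (a b : R) (A B C : vec) :
  minner m C (fun k => a * A k + b * B k) = a * minner m C A + b * minner m C B.
Proof. rewrite minner_sym, minner_lin_l, (minner_sym m A), (minner_sym m B). ring. Qed.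

Section Glue.
Variables (n : nat) (U : pt -> Prop) (X : pt -> vec) (Z : vec) (w0 w1 : pt -> R).
Hypothesis HU : open2 U.
Hypothesis HX : forall k, smooth_on U (fun p => X p k).

Definition Jt (a b k : nat) : pt -> R := itd (word a b) (fun q => X q k).
Definition Jv (a b : nat) (q : pt) : vec := fun k => Jt a b k q.
Definition rvq (q : pt) (a b c d : nat) : R := minner n (Jv a b q) (Jv c d q).
Definition rzq (q : pt) (a b : nat) : R := minner n (Jv a b q) Z.
Definition rwq (q : pt) (i : nat) : R := match i with O => w0 q | S _ => w1 q end.
Definition evq (q : pt) (e : E) : R := ev (rvq q) (rzq q) (rwq q) e.

Lemma Jt_swap (a b k : nat) (q : pt) : U q -> pd 1 (Jt a b k) q = Jt a (S b) k q.
Proof. intros Hq. exact (J_swap U _ a b HU (HX k) q Hq). Qed.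

Lemma Jder (a b k i : nat) (q : pt) : U q ->
  is_derive (fun s => Jt a b k (line i q s)) (crd i q)
    (match i with O => Jt (S a) b k q | S _ => Jt a (S b) k q end).
Proof.
  intros Hq. apply D_R.
  assert (H := smooth_der U (Jt a b k) i q (smooth_itd U _ _ (HX k)) Hq).
  destruct i as [|i].
  - exact H.
  - change (pd (S i) (Jt a b k) q) with (pd 1 (Jt a b k) q) in H.
    rewrite Jt_swap in H; auto.
Qed.

Fixpoint okE (q : pt) (e : E) : Prop :=
  match e with
  | EW _ => False
  | EA x y => okE q x /\ okE q y
  | EM x y => okE q x /\ okE q y
  | EI x => okE q x /\ evq q x <> 0
  | EN x => okE q x
  | _ => True
  end.

Lemma D1 (e : E) (q : pt) (i : nat) : U q -> okE q e ->
  is_derive (fun s => evq (line i q s) e) (crd i q) (evq q (dE i e)).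
Proof.
  intros Hq. destruct q as [q1 q2].
  assert (HL : line i (q1, q2) (crd i (q1, q2)) = (q1, q2)) by (destruct i; reflexivity).
  induction e; simpl; intros Hok.
  - unfold evq; simpl. unfold rvq.
    assert (H := D_minner n (fun s => Jv a b (line i (q1, q2) s)) (fun s => Jv c d (line i (q1, q2) s))
      (match i with O => Jv (S a) b (q1, q2) | S _ => Jv a (S b) (q1, q2) end)
      (match i with O => Jv (S c) d (q1, q2) | S _ => Jv c (S d) (q1, q2) end) (crd i (q1, q2))
      (fun k => ltac:(destruct i; exact (Jder _ _ k _ _ Hq)))
      (fun k => ltac:(destruct i; exact (Jder _ _ k _ _ Hq)))).
    cbv beta in H. rewrite HL in H. destruct i; exact H.
  - unfold evq; simpl. unfold rzq.
    assert (H := D_minner_c n (fun s => Jv a b (line i (q1, q2) s))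
      (match i with O => Jv (S a) b (q1, q2) | S _ => Jv a (S b) (q1, q2) end) Z (crd i (q1, q2))
      (fun k => ltac:(destruct i; exact (Jder _ _ k _ _ Hq)))).
    destruct i; exact H.
  - destruct Hok.
  - apply D_const.
  - destruct Hok as [H1 H2]. exact (D_plus _ _ _ _ _ (IHe1 H1) (IHe2 H2)).
  - destruct Hok as [H1 H2]. assert (H := D_mult _ _ _ _ _ (IHe1 H1) (IHe2 H2)).
    cbv beta in H. rewrite HL in H. exact H.
  - destruct Hok as [H1 H2]. assert (H2' : evq (line i (q1, q2) (crd i (q1, q2))) e <> 0) by (rewrite HL; exact H2).
    assert (H := D_inv _ _ _ (IHe H1) H2'). cbv beta in H. rewrite HL in H.
    eapply D_eqv; [|exact H]. unfold evq; simpl. rewrite Rinv_mult. ring.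
  - exact (D_opp _ _ _ (IHe Hok)).
Qed.

Lemma pdE (e : E) (q : pt) (i : nat) : U q -> okE q e ->
  pd i (fun r => evq r e) q = evq q (dE i e).
Proof. intros Hq Hok. apply pd_eq. apply D_R. exact (D1 e q i Hq Hok). Qed.


Lemma Jdir (a b k : nat) (p : pt) (v : R * R) : U p ->
  Dir v p (Jt a b k) (fst v * Jt (S a) b k p + snd v * Jt a (S b) k p).
Proof.
  intros Hp. assert (H := dir_smooth U (Jt a b k) p v HU (smooth_itd U _ _ (HX k)) Hp).
  rewrite Jt_swap in H by exact Hp. exact H.
Qed.

Fixpoint okD (q : pt) (e : E) : Prop :=
  match e with
  | EA x y => okD q x /\ okD q y
  | EM x y => okD q x /\ okD q y
  | EI x => okD q x /\ evq q x <> 0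
  | EN x => okD q x
  | _ => True
  end.

Lemma L0 (p : pt) (v : R * R) : (fst p + 0 * fst v, snd p + 0 * snd v) = p.
Proof. destruct p; simpl; f_equal; ring. Qed.

Lemma D2 (e : E) (p : pt) (v : R * R) (dw0 dw1 : R) : U p ->
  Dir v p w0 dw0 -> Dir v p w1 dw1 -> okD p e ->
  Dir v p (fun q => evq q e)
    (evD (rvq p) (rzq p) (rwq p) (fst v) (snd v) (fun i => match i with O => dw0 | S _ => dw1 end) e).
Proof.
  intros Hp Hw0 Hw1. unfold Dir in *.
  induction e; simpl; intros Hok.
  - unfold evq; simpl. unfold rvq.
    assert (H := D_minner n (fun s => Jv a b (fst p + s * fst v, snd p + s * snd v))
      (fun s => Jv c d (fst p + s * fst v, snd p + s * snd v))
      (fun k => fst v * Jt (S a) b k p + snd v * Jt a (S b) k p)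
      (fun k => fst v * Jt (S c) d k p + snd v * Jt c (S d) k p) 0
      (fun k => Jdir a b k p v Hp) (fun k => Jdir c d k p v Hp)).
    cbv beta in H. rewrite L0 in H.
    eapply D_eqv; [|exact H].
    rewrite minner_lin_l, minner_lin_r. unfold Jv. ring.
  - unfold evq; simpl. unfold rzq.
    assert (H := D_minner_c n (fun s => Jv a b (fst p + s * fst v, snd p + s * snd v))
      (fun k => fst v * Jt (S a) b k p + snd v * Jt a (S b) k p) Z 0
      (fun k => Jdir a b k p v Hp)).
    eapply D_eqv; [|exact H].
    rewrite minner_lin_l. unfold Jv. ring.
  - unfold evq; simpl. destruct i; [exact Hw0| exact Hw1].
  - apply D_const.
  - destruct Hok as [H1 H2]. exact (D_plus _ _ _ _ _ (IHe1 H1) (IHe2 H2)).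
  - destruct Hok as [H1 H2]. assert (H := D_mult _ _ _ _ _ (IHe1 H1) (IHe2 H2)).
    cbv beta in H. rewrite L0 in H. exact H.
  - destruct Hok as [H1 H2].
    assert (H2' : evq (fst p + 0 * fst v, snd p + 0 * snd v) e <> 0) by (rewrite L0; exact H2).
    assert (H := D_inv _ _ _ (IHe H1) H2'). cbv beta in H. rewrite L0 in H. exact H.
  - exact (D_opp _ _ _ (IHe Hok)).
Qed.

End Glue.

Lemma ev_ext (rv rv' : nat -> nat -> nat -> nat -> R) rz rw (e : E) :
  (forall a b c d, rv a b c d = rv' a b c d) -> ev rv rz rw e = ev rv' rz rw e.
Proof. intros H. induction e; simpl; try rewrite IHe1, IHe2; try rewrite IHe; auto. Qed.

Lemma evD_ext (rv rv' : nat -> nat -> nat -> nat -> R) rz rw v0 v1 dw (e : E) :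
  (forall a b c d, rv a b c d = rv' a b c d) -> evD rv rz rw v0 v1 dw e = evD rv' rz rw v0 v1 dw e.
Proof.
  intros H. induction e; simpl; try rewrite IHe1, IHe2; try rewrite IHe; try rewrite !(ev_ext rv rv'); auto.
  rewrite !H; auto.
Qed.

Lemma minner_4l (m : nat) (c1 c2 c3 c4 : R) (A B C D Y : vec) :
  minner m (fun k => c1 * A k + c2 * B k + c3 * C k + c4 * D k) Y =
  c1 * minner m A Y + c2 * minner m B Y + c3 * minner m C Y + c4 * minner m D Y.
Proof.
  unfold minner.
  assert (E : forall m', sumR m' (fun i => (c1 * A (S i) + c2 * B (S i) + c3 * C (S i) + c4 * D (S i)) * Y (S i)) =
     c1 * sumR m' (fun i => A (S i) * Y (S i)) + c2 * sumR m' (fun i => B (S i) * Y (S i))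
     + c3 * sumR m' (fun i => C (S i) * Y (S i)) + c4 * sumR m' (fun i => D (S i) * Y (S i))).
  { induction m'; simpl; [ring| rewrite IHm'; ring]. }
  rewrite E. ring.
Qed.

Lemma minner_sub2 (m : nat) (c0 c1 d0 d1 : R) (A B P Q : vec) :
  minner m (fun k => A k - (c0 * P k + c1 * Q k)) (fun k => B k - (d0 * P k + d1 * Q k)) =
  minner m A B - (d0 * minner m A P + d1 * minner m A Q) - (c0 * minner m P B + c1 * minner m Q B)
  + (c0 * d0 * minner m P P + c0 * d1 * minner m P Q + c1 * d0 * minner m Q P + c1 * d1 * minner m Q Q).
Proof.
  unfold minner.
  assert (E : forall m', sumR m' (fun i => (A (S i) - (c0 * P (S i) + c1 * Q (S i))) * (B (S i) - (d0 * P (S i) + d1 * Q (S i)))) =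
     sumR m' (fun i => A (S i) * B (S i)) - (d0 * sumR m' (fun i => A (S i) * P (S i)) + d1 * sumR m' (fun i => A (S i) * Q (S i)))
     - (c0 * sumR m' (fun i => P (S i) * B (S i)) + c1 * sumR m' (fun i => Q (S i) * B (S i)))
     + (c0 * d0 * sumR m' (fun i => P (S i) * P (S i)) + c0 * d1 * sumR m' (fun i => P (S i) * Q (S i))
        + c1 * d0 * sumR m' (fun i => Q (S i) * P (S i)) + c1 * d1 * sumR m' (fun i => Q (S i) * Q (S i)))).
  { induction m'; simpl; [ring| rewrite IHm'; ring]. }
  rewrite E. ring.
Qed.

Section Main.
Variables (n : nat) (U : pt -> Prop) (X : pt -> vec) (Z : vec) (w0 w1 : pt -> R).
Hypothesis HU : open2 U.
Hypothesis HX : forall k, smooth_on U (fun p => X p k).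

Notation evq := (evq n X Z w0 w1).

Lemma symV_eq (q : pt) a b c d : symV (rvq n X q) a b c d = rvq n X q a b c d.
Proof. unfold symV. destruct (Nat.leb _ _); [reflexivity| apply minner_sym]. Qed.

Lemma g_ev (i j : nat) (q : pt) : g n X i j q = evq q (GE i j).
Proof. destruct i as [|i]; destruct j as [|j]; reflexivity. Qed.

Lemma g_fun (i j : nat) : g n X i j = fun q => evq q (GE i j).
Proof. extensionality q. apply g_ev. Qed.

Lemma dg (k i j : nat) (q : pt) : U q -> pd k (g n X i j) q = evq q (dE k (GE i j)).
Proof. intros Hq. rewrite g_fun. apply (pdE n U X Z w0 w1 HU HX); auto. simpl; auto. Qed.

Lemma Chr_ev (k i j : nat) (q : pt) : U q -> Chr n X k i j q = evq q (ChrE k i j).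
Proof.
  intros Hq. unfold Chr. rewrite !dg by exact Hq.
  destruct k as [|k]; reflexivity.
Qed.

Lemma okChr (k i j : nat) (q : pt) : evq q detE <> 0 -> okE n X Z w0 w1 q (ChrE k i j).
Proof.
  intros H. destruct k as [|k]; destruct i as [|i]; destruct j as [|j]; cbn [okE ChrE ginvE dE GE ES detE]; tauto.
Qed.

Lemma dChr (m k i j : nat) (p : pt) : U p -> evq p detE <> 0 ->
  pd m (Chr n X k i j) p = evq p (dE m (ChrE k i j)).
Proof.
  intros Hp Hd. rewrite (pd_loc U (Chr n X k i j) (fun q => evq q (ChrE k i j)) m p HU Hp).
  - apply (pdE n U X Z w0 w1 HU HX); auto. apply okChr; auto.
  - intros q Hq. apply Chr_ev; auto.
Qed.

Lemma GaussK_ev (p : pt) : U p -> evq p detE <> 0 -> GaussK n X p = evq p KE.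
Proof.
  intros Hp Hd. unfold GaussK, Rup.
  rewrite !dChr by auto. rewrite !Chr_ev by auto.
  reflexivity.
Qed.

Lemma tc_ev (k : nat) (q : pt) : tancoef n X k Z q = evq q (TcE k).
Proof.
  unfold tancoef. rewrite (minner_sym n Z (vpd 0 X q)), (minner_sym n Z (vpd 1 X q)).
  destruct k as [|k]; reflexivity.
Qed.

Lemma minner_tvec (a b c d : R) (q : pt) :
  minner n (tvec X a b q) (tvec X c d q) =
  a * c * g n X 0 0 q + a * d * g n X 0 1 q + b * c * g n X 1 0 q + b * d * g n X 1 1 q.
Proof.
  unfold tvec, vadd, vscale, g.
  rewrite minner_lin_l, !minner_lin_r. ring.
Qed.

Lemma C_ev (q : pt) : minner n (tanproj n X Z q) (tanproj n X Z q) = evq q CE.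
Proof. unfold tanproj. rewrite minner_tvec, !tc_ev, !g_ev. reflexivity. Qed.

Lemma E1_ev (q : pt) : minner n (tvec X (w0 q) (w1 q) q) (tvec X (w0 q) (w1 q) q) = evq q E1E.
Proof. rewrite minner_tvec, !g_ev. reflexivity. Qed.

Lemma E2_ev (q : pt) : minner n (tanproj n X Z q) (tvec X (w0 q) (w1 q) q) = evq q E2E.
Proof. unfold tanproj. rewrite minner_tvec, !tc_ev, !g_ev. reflexivity. Qed.

Lemma det_ev (q : pt) : detg n X q = evq q detE.
Proof. reflexivity. Qed.

Lemma det_nz (q : pt) : timelike_at n X q -> evq q detE <> 0.
Proof.
  intros [a [b [c [d [H1 [H2 H3]]]]]].
  rewrite !minner_tvec in *. rewrite <- det_ev. unfold detg.
  assert (Hs : g n X 1 0 q = g n X 0 1 q) by (unfold g; apply minner_sym).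
  rewrite Hs in *.
  set (g00 := g n X 0 0 q) in *. set (g01 := g n X 0 1 q) in *. set (g11 := g n X 1 1 q) in *.
  intro H0.
  assert (E : (a*a*g00 + a*b*g01 + b*a*g01 + b*b*g11) * (c*c*g00 + c*d*g01 + d*c*g01 + d*d*g11)
     - (a*c*g00 + a*d*g01 + b*c*g01 + b*d*g11) * (a*c*g00 + a*d*g01 + b*c*g01 + b*d*g11)
     = (a*d - b*c) * (a*d - b*c) * (g00 * g11 - g01 * g01)) by ring.
  rewrite H1, H2, H3, H0 in E. lra.
Qed.

Lemma t_nz (q : pt) : lightlike n (tanproj n X Z q) ->
  evq q (TcE 0) <> 0 \/ evq q (TcE 1) <> 0.
Proof.
  intros [[i [Hi Hne]] _]. rewrite <- !tc_ev.
  destruct (classic (tancoef n X 0 Z q = 0)) as [H0|H0]; [|left; auto].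
  destruct (classic (tancoef n X 1 Z q = 0)) as [H1|H1]; [|right; auto].
  exfalso. apply Hne. unfold tanproj, tvec, vadd, vscale. rewrite H0, H1. ring.
Qed.

Lemma np_ev (a b : nat) (q : pt) :
  minner n (normproj n X (Jv X a b q) q) (normproj n X Z q) = evq q (aab a b).
Proof.
  unfold normproj, vsub, tanproj, tvec, vadd, vscale. rewrite minner_sub2.
  rewrite !tc_ev. reflexivity.
Qed.

Lemma II_J (q : pt) : U q ->
  II n X 0 0 q = normproj n X (Jv X 2 0 q) q /\ II n X 0 1 q = normproj n X (Jv X 1 1 q) q /\
  II n X 1 0 q = normproj n X (Jv X 1 1 q) q /\ II n X 1 1 q = normproj n X (Jv X 0 2 q) q.
Proof.
  intros Hq. split; [reflexivity|]. split; [reflexivity|]. split; [|reflexivity].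
  unfold II. f_equal. extensionality k.
  exact (J_swap U (fun r => X r k) 1 0 HU (HX k) q Hq).
Qed.

Lemma a_ev (q : pt) : U q ->
  minner n (IIv n X (w0 q) (w1 q) (w0 q) (w1 q) q) (normproj n X Z q) = evq q AE.
Proof.
  intros Hq. unfold IIv. rewrite minner_4l.
  destruct (II_J q Hq) as [-> [-> [-> ->]]].
  rewrite !np_ev. reflexivity.
Qed.

End Main.

Lemma okE_dE n X Z w0 w1 (q : pt) (e : E) (i : nat) :
  okE n X Z w0 w1 q e -> okE n X Z w0 w1 q (dE i e).
Proof.
  induction e; simpl; intros H; try tauto.
  - destruct i; simpl; tauto.
  - destruct i; simpl; tauto.
Qed.

Section Final.
Variables (n : nat) (U : pt -> Prop) (X : pt -> vec) (Z : vec) (w0 w1 : pt -> R).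
Hypothesis HU : open2 U.
Hypothesis HX : forall k, smooth_on U (fun p => X p k).
Hypothesis Htl : forall p, U p -> timelike_at n X p.
Hypothesis Hlt : forall p, U p -> lightlike n (tanproj n X Z p).
Hypothesis HW : forall p, U p -> lightlike n (tvec X (w0 p) (w1 p) p).
Hypothesis HE2 : forall p, U p -> minner n (tanproj n X Z p) (tvec X (w0 p) (w1 p) p) = -1.

Notation evq := (evq n X Z w0 w1).

Lemma evS (q : pt) (e : E) : ev (symV (rvq n X q)) (rzq n X Z q) (rwq w0 w1 q) e = evq q e.
Proof. apply ev_ext. apply symV_eq. Qed.

Lemma facts (q : pt) : U q ->
  evq q detE <> 0 /\ evq q CE = 0 /\ evq q E1E = 0 /\ evq q E2E = -1 /\
  (evq q (TcE 0) <> 0 \/ evq q (TcE 1) <> 0).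
Proof.
  intros Hq. repeat split.
  - apply det_nz. auto.
  - rewrite <- C_ev. exact (proj2 (Hlt q Hq)).
  - rewrite <- E1_ev. exact (proj2 (HW q Hq)).
  - rewrite <- E2_ev. auto.
  - apply t_nz. auto.
Qed.

Lemma w_form (q : pt) : U q ->
  evq q nfE <> 0 /\ w0 q = evq q (WformE 0) /\ w1 q = evq q (WformE 1).
Proof.
  intros Hq. destruct (facts q Hq) as [H1 [H2 [H3 [H4 H5]]]].
  rewrite <- !evS in H1, H2, H3, H4, H5. rewrite <- (evS q (TcE 1)) in H5.
  destruct (wform (rvq n X q) (rzq n X Z q) (rwq w0 w1 q) H1 H2 H3 H4 H5) as [A [B C]].
  rewrite !evS in A, B, C. split; [exact A| split; [exact B| exact C]].
Qed.

Lemma w_dir (p : pt) (v : R * R) : U p ->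
  exists dw0 dw1, Dir v p w0 dw0 /\ Dir v p w1 dw1.
Proof.
  intros Hp. destruct (facts p Hp) as [Hd _]. destruct (w_form p Hp) as [Hnf _].
  set (z := fun _ : pt => 0).
  assert (Hok : forall i, okD n X Z z z p (WformE i)).
  { intros i; destruct i as [|i]; cbn [okD WformE YE quad TcE ginvE fE GE nfE detE ES];
    repeat match goal with
    | |- _ /\ _ => split
    | |- True => exact I
    | |- _ => first [exact Hd | exact Hnf | progress cbn [okD detE ES GE]]
    end. }
  assert (HD0 := D2 n U X Z z z HU HX (WformE 0) p v 0 0 Hp (dir_const 0 p v) (dir_const 0 p v) (Hok 0%nat)).
  assert (HD1 := D2 n U X Z z z HU HX (WformE 1) p v 0 0 Hp (dir_const 0 p v) (dir_const 0 p v) (Hok 1%nat)).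
  eexists; eexists; split.
  - eapply (dir_loc U); [exact HU| exact Hp| |exact HD0].
    intros q Hq. rewrite (proj1 (proj2 (w_form q Hq))). reflexivity.
  - eapply (dir_loc U); [exact HU| exact Hp| |exact HD1].
    intros q Hq. rewrite (proj2 (proj2 (w_form q Hq))). reflexivity.
Qed.

Lemma C3_0 (q : pt) : U q -> evq q C3E = 0.
Proof.
  intros Hq. destruct (facts q Hq) as [Hd [HC _]].
  rewrite <- (evS q detE) in Hd. rewrite <- (evS q CE) in HC. rewrite <- (evS q C3E). rewrite (CE_C3 _ _ _ Hd), HC. ring.
Qed.

Lemma E22 (q : pt) : U q -> evq q E2E2 = -1.
Proof.
  intros Hq. destruct (facts q Hq) as [Hd [_ [_ [H2 _]]]].
  rewrite <- (evS q detE) in Hd. rewrite <- (evS q E2E) in H2. rewrite <- (evS q E2E2). rewrite <- (E2_E22 _ _ _ Hd). exact H2.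
Qed.

Lemma a_ev2 (q : pt) : U q ->
  minner n (IIv n X (w0 q) (w1 q) (w0 q) (w1 q) q) (normproj n X Z q) = evq q AE2.
Proof.
  intros Hq. rewrite (a_ev n U X Z w0 w1 HU HX q Hq).
  destruct (facts q Hq) as [Hd _]. rewrite <- (evS q detE) in Hd. rewrite <- (evS q AE), <- (evS q AE2). apply AE_AE2; exact Hd.
Qed.

Lemma okD_det (p : pt) (e : E) : evq p detE <> 0 ->
  (e = AE2 \/ e = E1E \/ e = E2E2) -> okD n X Z w0 w1 p e.
Proof.
  intros Hd He.
  destruct He as [-> | [-> | ->]];
    cbn [okD AE2 WW hE PjE E1E E2E2 ES quad TcE tcV ginvE fE GE detE jxa jxb Nat.add];
    repeat match goal with
    | |- _ /\ _ => split
    | |- True => exact I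
    | |- _ => first [exact Hd | progress cbn [okD detE ES GE]]
    end.
Qed.

Lemma okE_C3 (q : pt) : okE n X Z w0 w1 q C3E.
Proof. cbn [okE C3E ES GE fE]. tauto. Qed.

Lemma pd_const (i : nat) (c : R) (q : pt) : pd i (fun _ => c) q = 0.
Proof. apply pd_eq. apply derivable_pt_lim_const. Qed.

Lemma dC0 (k : nat) (q : pt) : U q -> evq q (dE k C3E) = 0.
Proof.
  intros Hq.
  rewrite <- (pdE n U X Z w0 w1 HU HX C3E q k Hq (okE_C3 q)).
  rewrite (pd_loc U (fun r => evq r C3E) (fun _ => 0) k q HU Hq).
  - apply pd_const.
  - intros r Hr. apply C3_0; auto.
Qed.

Lemma ddC0 (l m : nat) (p : pt) : U p -> evq p (dE l (dE m C3E)) = 0.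
Proof.
  intros Hp.
  rewrite <- (pdE n U X Z w0 w1 HU HX (dE m C3E) p l Hp (okE_dE _ _ _ _ _ _ _ _ (okE_C3 p))).
  rewrite (pd_loc U (fun r => evq r (dE m C3E)) (fun _ => 0) l p HU Hp).
  - apply pd_const.
  - intros r Hr. apply dC0; auto.
Qed.

Lemma main_at (p : pt) : U p ->
  derivable_pt_lim
    (fun s => (fun q => minner n (IIv n X (w0 q) (w1 q) (w0 q) (w1 q) q) (normproj n X Z q))
       (fst p + s * tancoef n X 0 Z p, snd p + s * tancoef n X 1 Z p))
    0 (GaussK n X p).
Proof.
  intros Hp.
  set (v := (tancoef n X 0 Z p, tancoef n X 1 Z p)).
  destruct (w_dir p v Hp) as [dw0 [dw1 [Hw0 Hw1]]].
  destruct (facts p Hp) as [Hd [HCp [HE1 [HE2p Ht]]]].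
  assert (HA := D2 n U X Z w0 w1 HU HX AE2 p v dw0 dw1 Hp Hw0 Hw1 (okD_det p AE2 Hd (or_introl eq_refl))).
  assert (Ha : Dir v p (fun q => minner n (IIv n X (w0 q) (w1 q) (w0 q) (w1 q) q) (normproj n X Z q))
                 (evD (rvq n X p) (rzq n X Z p) (rwq w0 w1 p) (fst v) (snd v)
                    (fun i : nat => match i with O => dw0 | S _ => dw1 end) AE2)).
  { eapply (dir_loc U); [exact HU| exact Hp| |exact HA]. intros q Hq. symmetry. apply a_ev2; auto. }
  assert (HD1 := D2 n U X Z w0 w1 HU HX E1E p v dw0 dw1 Hp Hw0 Hw1 (okD_det p E1E Hd (or_intror (or_introl eq_refl)))).
  assert (HD1' : Dir v p (fun q => evq q E1E) 0).
  { eapply (dir_loc U); [exact HU| exact Hp| |exact (dir_const 0 p v)].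
    intros q Hq. symmetry. exact (proj1 (proj2 (proj2 (facts q Hq)))). }
  assert (HE1D := dir_uniq _ _ _ _ _ HD1 HD1').
  assert (HD2 := D2 n U X Z w0 w1 HU HX E2E2 p v dw0 dw1 Hp Hw0 Hw1 (okD_det p E2E2 Hd (or_intror (or_intror eq_refl)))).
  assert (HD2' : Dir v p (fun q => evq q E2E2) 0).
  { eapply (dir_loc U); [exact HU| exact Hp| |exact (dir_const (-1) p v)].
    intros q Hq. symmetry. apply E22; auto. }
  assert (HE2D := dir_uniq _ _ _ _ _ HD2 HD2').
  destruct (HC3_0 (rvq n X p) (rzq n X Z p) (rwq w0 w1 p) (fun k => dC0 k p Hp) (fun l m => ddC0 l m p Hp)) as [HH [HR HW']].
  change (evq p HC3 = 0) in HH. change (evq p CR = 0) in HR. change (evq p dC3W = 0) in HW'.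
  rewrite <- !evS in Hd, HCp, HE1, HE2p, Ht. rewrite <- (evS p (TcE 1)) in Ht.
  assert (Halg := alg (rvq n X p) (rzq n X Z p) (rwq w0 w1 p)
     (fun i : nat => match i with O => dw0 | S _ => dw1 end) Hd HCp HE1 HE2p Ht).
  rewrite !evS in Halg.
  rewrite !(evD_ext (symV (rvq n X p)) (rvq n X p)) in Halg by apply symV_eq.
  rewrite <- !tc_ev in Halg.
  unfold v in *; cbn [fst snd] in *.
  rewrite HE1D, HE2D, HH, HR, HW' in Halg.
  apply D_R. unfold Dir in Ha. cbn [fst snd] in Ha.
  eapply D_eqv; [|exact Ha].
  rewrite (GaussK_ev n U X Z w0 w1 HU HX p Hp (proj1 (facts p Hp))).
  unfold Rdiv in Halg. lra.
Qed.

End Final.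

Theorem mainTheorem5 (n : nat) (U : pt -> Prop) (X : pt -> vec) (Z : vec)
  (w0 w1 : pt -> R) :
  open2 U ->
  (forall k, smooth_on U (fun p => X p k)) ->
  (forall p, U p -> immersion_at n X p) ->
  (forall p, U p -> timelike_at n X p) ->
  minner n Z Z = 1 ->
  (forall p, U p -> lightlike n (tanproj n X Z p)) ->
  (forall p, U p -> lightlike n (tvec X (w0 p) (w1 p) p)) ->
  (forall p, U p -> minner n (tanproj n X Z p) (tvec X (w0 p) (w1 p) p) = -1) ->
  let a := fun q : pt =>
    minner n (IIv n X (w0 q) (w1 q) (w0 q) (w1 q) q) (normproj n X Z q) in
  forall p, U p ->
    derivable_pt_lim
      (fun s => a (fst p + s * tancoef n X 0 Z p, snd p + s * tancoef n X 1 Z p))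
      0 (GaussK n X p).
Proof.
  intros HU HX _ Htl _ Hlt HW HE2 a p Hp.
  exact (main_at n U X Z w0 w1 HU HX Htl Hlt HW HE2 p Hp).
Qed.
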